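(* Let $N\ge 1$, let $\mathcal{L}_e$ be a finite index set of size $L_e$, and for each $\ell\in\mathcal{L}_e$ let $\mathbf{a}_\ell\in\mathbb{R}^N$ and $r_\ell>0$, $x_\ell>0$ be given. For $\mathbf{b}=(b_\ell)_{\ell\in\mathcal{L}_e}\in\mathbb{R}^{L_e}$ define $$\mathbf{R}^{-1}(\mathbf{b})=\frac12\sum_{\ell\in\mathcal{L}_e}\frac{b_\ell}{r_\ell}\mathbf{a}_\ell\mathbf{a}_\ell^\top,\qquad \mathbf{X}^{-1}(\mathbf{b})=\frac12\sum_{\ell\in\mathcal{L}_e}\frac{b_\ell}{x_\ell}\mathbf{a}_\ell\mathbf{a}_\ell^\top,$$ and, whenever these two matrices are invertible, let $\mathbf{R}(\mathbf{b}),\mathbf{X}(\mathbf{b})$ denote their inverses. Let $\boldsymbol{\Sigma}_p,\boldsymbol{\Sigma}_q\in\mathbb{R}^{N\times N}$ be symmetric, $\boldsymbol{\Sigma}_{pq}\in\mathbb{R}^{N\times N}$, $\sigma_n^2\ge 0$, and $$\boldsymbol{\Sigma}(\mathbf{b})=\mathbf{R}(\mathbf{b})\boldsymbol{\Sigma}_p\mathbf{R}(\mathbf{b})+\mathbf{X}(\mathbf{b})\boldsymbol{\Sigma}_q\mathbf{X}(\mathbf{b})+\mathbf{R}(\mathbf{b})\boldsymbol{\Sigma}_{pq}\mathbf{X}(\mathbf{b})+\mathbf{X}(\mathbf{b})\boldsymbol{\Sigma}_{pq}^\top\mathbf{R}(\mathbf{b})+\sigma_n^2\mathbf{I}_N.$$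 Let $\hat{\boldsymbol{\Sigma}}\in\mathbb{R}^{N\times N}$ be symmetric positive semidefinite and $f(\mathbf{b})=\log|\boldsymbol{\Sigma}(\mathbf{b})|+\operatorname{trace}(\boldsymbol{\Sigma}^{-1}(\mathbf{b})\hat{\boldsymbol{\Sigma}})$. Then at any $\mathbf{b}$ where $\mathbf{R}(\mathbf{b})$, $\mathbf{X}(\mathbf{b})$ exist and $\boldsymbol{\Sigma}(\mathbf{b})\succ 0$, for every $\ell\in\mathcal{L}_e$, $$\frac{\partial f(\mathbf{b})}{\partial b_\ell}=-\frac{1}{r_\ell}\mathbf{a}_\ell^\top\mathbf{R}\boldsymbol{\Sigma}_p\mathbf{R}\mathbf{F}\mathbf{R}\mathbf{a}_\ell-\frac{1}{x_\ell}\mathbf{a}_\ell^\top\mathbf{X}\boldsymbol{\Sigma}_q\mathbf{X}\mathbf{F}\mathbf{X}\mathbf{a}_\ell-\frac{1}{r_\ell}\mathbf{a}_\ell^\top\mathbf{R}\boldsymbol{\Sigma}_{pq}\mathbf{X}\mathbf{F}\mathbf{R}\mathbf{a}_\ell-\frac{1}{x_\ell}\mathbf{a}_\ell^\top\mathbf{X}\mathbf{F}\mathbf{R}\boldsymbol{\Sigma}_{pq}\mathbf{X}\mathbf{a}_\ell,$$ where $\mathbf{R}=\mathbf{R}(\mathbf{b})$, $\mathbf{X}=\mathbf{X}(\mathbf{b})$ and $\mathbf{F}=\mathbf{F}(\mathbf{b}):=\boldsymbol{\Sigma}^{-1}(\mathbf{b})-\boldsymbol{\Sigma}^{-1}(\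mathbf{b})\hat{\boldsymbol{\Sigma}}\boldsymbol{\Sigma}^{-1}(\mathbf{b})$.
   Context: $|\cdot|$ denotes the determinant. In the application, $\mathbf{a}_\ell^\top$ are rows of a reduced branch-bus incidence matrix of a distribution grid (substation column removed), $r_\ell,x_\ell$ are line resistances and reactances, $\mathbf{b}$ is a line-status indicator vector, $\boldsymbol{\Sigma}_p=\mathbb{E}[\tilde{\mathbf p}\tilde{\mathbf p}^\top]$, $\boldsymbol{\Sigma}_q=\mathbb{E}[\tilde{\mathbf q}\tilde{\mathbf q}^\top]$, $\boldsymbol{\Sigma}_{pq}=\mathbb{E}[\tilde{\mathbf p}\tilde{\mathbf q}^\top]$ are covariances of differential active/reactive power injections, and $\hat{\boldsymbol{\Sigma}}$ is the sample covariance of differential squared-voltage data. *)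

(* Defs.v *)
From HB Require Import structures.
From mathcomp Require Import all_boot all_order all_algebra.
From mathcomp Require Import all_classical all_reals all_analysis.
Set Implicit Arguments. Unset Strict Implicit. Unset Printing Implicit Defensive.
Import Order.TTheory GRing.Theory Num.Theory.
Import numFieldNormedType.Exports.
Local Open Scope ring_scope.

Section Defs.
Variables (R : realType) (N : nat) (Le : finType).

(* (1/2) sum_l (b_l / w_l) a_l a_l^T ; with w = r gives R^{-1}(b), w = x gives X^{-1}(b) *)
Definition inv_weighted (a : Le -> 'cV[R]_N) (w : Le -> R) (b : Le -> R) : 'M[R]_N :=
  (1/2) *: \sum_(l : Le) (b l / w l) *: (a l *m (a l)^T).

Definition Sigma_b (a : Le -> 'cV[R]_N) (r x : Le -> R)
  (Sp Sq Spq : 'M[R]_N) (sn2 : R) (b : Le -> R) : 'M[R]_N :=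
  let Rm := invmx (inv_weighted a r b) in
  let Xm := invmx (inv_weighted a x b) in
  Rm *m Sp *m Rm + Xm *m Sq *m Xm + Rm *m Spq *m Xm + Xm *m Spq^T *m Rm
  + sn2 *: 1%:M.

Definition f_obj (a : Le -> 'cV[R]_N) (r x : Le -> R)
  (Sp Sq Spq : 'M[R]_N) (sn2 : R) (Shat : 'M[R]_N) (b : Le -> R) : R :=
  let S := Sigma_b a r x Sp Sq Spq sn2 b in
  ln (\det S) + \tr (invmx S *m Shat).

Definition F_mat (a : Le -> 'cV[R]_N) (r x : Le -> R)
  (Sp Sq Spq : 'M[R]_N) (sn2 : R) (Shat : 'M[R]_N) (b : Le -> R) : 'M[R]_N :=
  let S := Sigma_b a r x Sp Sq Spq sn2 b in
  invmx S - invmx S *m Shat *m invmx S.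

Definition quadf (v : 'cV[R]_N) (M : 'M[R]_N) : R := (v^T *m M *m v) 0 0.

Definition sym_mx (M : 'M[R]_N) : Prop := M^T = M.

Definition psd_mx (M : 'M[R]_N) : Prop :=
  sym_mx M /\ forall v : 'cV[R]_N, 0 <= quadf v M.

Definition pd_mx (M : 'M[R]_N) : Prop :=
  sym_mx M /\ forall v : 'cV[R]_N, v != 0 -> 0 < quadf v M.

Definition shift_coord (b : Le -> R) (l : Le) (t : R) : Le -> R :=
  fun k => b k + (if k == l then t else 0).

End Defs.

(* Main.v *)
Require Import Defs.
From HB Require Import structures.
From mathcomp Require Import all_boot all_order all_algebra.
From mathcomp Require Import all_classical all_reals all_analysis.
From mathcomp Require Import ring lra.
Import Order.TTheory GRing.Theory Num.Theory.
Import numFieldNormedType.Exports.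
Local Open Scope ring_scope.

Section Scal.
Context {R : realType}.
Implicit Types f g : R -> R.

Lemma dM f g t df dg : is_derive t (1:R) f df -> is_derive t (1:R) g dg ->
  is_derive t (1:R) (fun u => f u * g u) (df * g t + f t * dg).
Proof.
move=> Hf Hg; have H := is_deriveM Hf Hg.
have -> : (fun u => f u * g u) = (f * g)%R by apply: funext.
eapply is_derive_eq; [exact H|].
rewrite /GRing.scale /= addrC mulrC; congr (_ + _); exact: mulrC.
Qed.

Lemma dSum (I : Type) (s : seq I) (h : I -> R -> R) (dh : I -> R) t :
  (forall i, is_derive t (1:R) (h i) (dh i)) ->
  is_derive t (1:R) (fun u => \sum_(i <- s) h i u) (\sum_(i <- s) dh i).
Proof.
move=> H; elim: s => [|x s IH].
  under eq_fun do rewrite big_nil. rewrite big_nil; exact: is_derive_cst.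
under eq_fun do rewrite big_cons. rewrite big_cons.
have := is_deriveD (H x) IH. by [].
Qed.

Lemma dProd (I : eqType) (s : seq I) (h : I -> R -> R) (dh : I -> R) t :
  uniq s -> (forall i, is_derive t (1:R) (h i) (dh i)) ->
  is_derive t (1:R) (fun u => \prod_(i <- s) h i u)
     (\sum_(k <- s) dh k * \prod_(i <- s | i != k) h i t).
Proof.
move=> + H; elim: s => [|x s IH] /=.
  move=> _; under eq_fun do rewrite big_nil. rewrite big_nil; exact: is_derive_cst.
case/andP=> xs us.
under eq_fun do rewrite big_cons.
apply: is_derive_eq; first exact: dM (H x) (IH us).
rewrite big_cons big_cons eqxx /=.
congr (_ + _).
  congr (_ * _); rewrite big_seq_cond [RHS]big_seq_cond; apply: eq_bigl => i.
  by case: (boolP (i \in s)) => //= ix; apply/esym/negP => /eqP ?; subst; rewrite ix in xs.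
rewrite big_distrr /= big_seq [RHS]big_seq; apply: eq_bigr => k ks.
rewrite big_cons; have -> : (x != k) by apply/negP => /eqP ?; subst; rewrite ks in xs.
by rewrite mulrCA.
Qed.

Lemma dcst (c : R) t : is_derive t (1:R) (fun _ => c) 0.
Proof. exact: is_derive_cst. Qed.

Lemma dNear f g t d : (\forall u \near t, f u = g u) -> is_derive t (1:R) f d -> is_derive t (1:R) g d.
Proof. move=> H; exact: near_eq_is_derive. Qed.

Lemma d_uniq f t d1 d2 : is_derive t (1:R) f d1 -> is_derive t (1:R) f d2 -> d1 = d2.
Proof. by move=> [_ <-] [_ <-]. Qed.

Lemma d_cont f t d : is_derive t (1:R) f d -> {for t, continuous f}.
Proof. by move=> [/derivable1_diffP/differentiable_continuous]. Qed.

Lemma d_near_neq0 f t d : is_derive t (1:R) f d -> f t != 0 -> \forall u \near t, f u != 0.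
Proof. move=> /d_cont H ne; exact: (@cvgr_neq0 _ _ _ _ _ f _ H ne). Qed.

End Scal.
Arguments dM {R f g t df dg}.
Arguments dNear {R f g t d}.
Arguments d_uniq {R f t d1 d2}.
Arguments d_cont {R f t d}.
Arguments d_near_neq0 {R f t d}.


Section Mat.
Context {R : realType}.

Definition MD {m n} (M : R -> 'M[R]_(m, n)) (t : R) (D : 'M[R]_(m, n)) :=
  forall i j, is_derive t (1:R) (fun u => M u i j) (D i j).

Lemma MD_cst m n (A : 'M[R]_(m,n)) t : MD (fun _ => A) t 0.
Proof. by move=> i j; rewrite mxE; exact: dcst. Qed.

Lemma MD_add m n (A B : R -> 'M[R]_(m,n)) t dA dB : MD A t dA -> MD B t dB ->
  MD (fun u => A u + B u) t (dA + dB).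
Proof.
move=> HA HB i j; under eq_fun do rewrite mxE. rewrite mxE.
exact: is_deriveD (HA i j) (HB i j).
Qed.

Lemma MD_opp m n (A : R -> 'M[R]_(m,n)) t dA : MD A t dA ->
  MD (fun u => - A u) t (- dA).
Proof.
move=> HA i j; under eq_fun do rewrite mxE. rewrite mxE.
exact: is_deriveN (HA i j).
Qed.

Lemma MD_scale m n (c : R) (A : R -> 'M[R]_(m,n)) t dA : MD A t dA ->
  MD (fun u => c *: A u) t (c *: dA).
Proof.
move=> HA i j; under eq_fun do rewrite mxE. rewrite mxE.
have := dM (dcst c t) (HA i j). by rewrite mul0r add0r.
Qed.

Lemma MD_mul m n p (A : R -> 'M[R]_(m,n)) (B : R -> 'M[R]_(n,p)) t dA dB :
  MD A t dA -> MD B t dB ->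
  MD (fun u => A u *m B u) t (dA *m B t + A t *m dB).
Proof.
move=> HA HB i j; under eq_fun do rewrite mxE. rewrite !mxE.
apply: is_derive_eq; first by apply: dSum => k; exact: dM (HA i k) (HB k j).
rewrite -big_split /=; by apply: eq_bigr => k _.
Qed.

Lemma MD_trace n (A : R -> 'M[R]_n) t dA : MD A t dA ->
  is_derive t (1:R) (fun u => \tr (A u)) (\tr dA).
Proof.
move=> HA; rewrite /mxtrace; exact: dSum => i; exact: HA.
Qed.

Lemma MD_minor n (A : R -> 'M[R]_n.+1) t dA i0 j0 : MD A t dA ->
  MD (fun u => row' i0 (col' j0 (A u))) t (row' i0 (col' j0 dA)).
Proof.
move=> HA i j; under eq_fun do rewrite !mxE. rewrite !mxE; exact: HA.
Qed.

Lemma MD_det n (A : R -> 'M[R]_n) t dA : MD A t dA ->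
  is_derive t (1:R) (fun u => \det (A u)) (\tr (dA *m \adj (A t))).
Proof.
move=> HA.
rewrite /determinant.
apply: is_derive_eq.
  apply: dSum => s; apply: (dM (dcst _ _)).
  apply: dProd; first exact: index_enum_uniq.
  move=> i; exact: HA.
set Rk := fun k : 'I_n => \matrix_(i, j) (if i == k then dA i j else A t i j).
have E1 : forall k, \det (Rk k) = \sum_j dA k j * cofactor (A t) k j.
  move=> k; rewrite (expand_det_row _ k); apply: eq_bigr => j _.
  rewrite /Rk mxE eqxx; congr (_ * _).
  rewrite /cofactor; congr (_ * _); congr (\det _).
  by apply/matrixP => i i'; rewrite !mxE eq_sym (negbTE (neq_lift _ _)).
have E2 : \tr (dA *m \adj (A t)) = \sum_k \det (Rk k).
  rewrite /mxtrace; apply: eq_bigr => k _; rewrite E1 mxE.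
  by apply: eq_bigr => j _; rewrite mxE.
rewrite E2 /determinant exchange_big /=; apply: eq_bigr => s _.
rewrite mul0r add0r big_distrr /=; apply: eq_bigr => k _.
rewrite [in RHS](bigD1 k) //= /Rk !mxE eqxx; congr (_ * (_ * _)).
by apply: eq_bigr => i ik; rewrite mxE (negbTE ik).
Qed.

End Mat.
Arguments MD_cst {R m n} A t.
Arguments MD_add {R m n A B t dA dB}.
Arguments MD_opp {R m n A t dA}.
Arguments MD_scale {R m n} c {A t dA}.
Arguments MD_mul {R m n p A B t dA dB}.
Arguments MD_trace {R n A t dA}.
Arguments MD_minor {R n A t dA} i0 j0.
Arguments MD_det {R n A t dA}.


Section Inv.
Context {R : realType}.

Lemma MD_inv n (A : R -> 'M[R]_n) t dA : MD A t dA -> A t \in unitmx ->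
  MD (fun u => invmx (A u)) t (- (invmx (A t) *m dA *m invmx (A t))).
Proof.
case: n A dA => [|n] A dA HA Hu; first by move=> i; case: i.
have Hdet := MD_det HA.
have Hne : \det (A t) != 0 by rewrite -unitfE -unitmxE.
have Hnear := d_near_neq0 Hdet Hne.
have Hentry : forall i j, derivable (fun u => invmx (A u) i j) t 1.
  move=> i j.
  have H1 := dM (is_deriveV Hne Hdet) (dM (dcst ((-1) ^+ (j + i)) t) (MD_det (MD_minor j i HA))).
  have Hn : \forall u \near t, (\det (A u))^-1 * ((-1) ^+ (j + i) * \det (row' j (col' i (A u)))) = invmx (A u) i j.
    apply: filterS Hnear => u Hu0.
    by rewrite /invmx unitmxE unitfE Hu0 !mxE.
  by case: (dNear Hn H1).
set Y := \matrix_(i, j) 'D_1 (fun u => invmx (A u) i j) t.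
have HY : MD (fun u => invmx (A u)) t Y.
  by move=> i j; rewrite mxE; apply: derivableP; exact: Hentry.
have HP := MD_mul HA HY.
have HP' : MD (fun u => A u *m invmx (A u)) t 0.
  move=> i j; apply: dNear (MD_cst (1%:M : 'M[R]_n.+1) t i j).
  apply: filterS Hnear => u Hu0.
  by rewrite mulmxV // unitmxE unitfE Hu0.
have E : dA *m invmx (A t) + A t *m Y = 0.
  by apply/matrixP => i j; exact: d_uniq (HP i j) (HP' i j).
suff -> : - (invmx (A t) *m dA *m invmx (A t)) = Y by exact: HY.
have E2 : A t *m Y = - (dA *m invmx (A t)) by apply/eqP; rewrite -subr_eq0 opprK addrC E.
by rewrite -[in RHS](mul1mx Y) -(mulVmx Hu) -[in RHS]mulmxA E2 mulmxN mulmxA.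
Qed.

End Inv.
Arguments MD_inv {R n A t dA}.


Section PD.
Context {R : realType}.

Lemma dD (f g : R -> R) t df dg : is_derive t (1:R) f df -> is_derive t (1:R) g dg ->
  is_derive t (1:R) (fun u => f u + g u) (df + dg).
Proof. move=> Hf Hg; exact: is_deriveD Hf Hg. Qed.

Lemma MD_lin m n (B C : 'M[R]_(m, n)) t : MD (fun u => B + u *: C) t C.
Proof.
move=> i j; under eq_fun do rewrite !mxE.
apply: is_derive_eq.
by rewrite add0r mul1r scaler0 add0r [_%:A]mulr1.
Qed.

Arguments MD_lin {m n}.

Lemma pd_det_neq0 n (M : 'M[R]_n) :
  (forall v, v != 0 -> 0 < quadf v M) -> \det M != 0.
Proof.
move=> H; apply/negP => /det0P [v vn0 vM].
have : v^T != 0 by apply: contra vn0 => /eqP; rewrite -trmx0 => /trmx_inj ->.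
move/H; rewrite /quadf trmxK vM mul0mx mxE.
by rewrite ltxx.
Qed.

Lemma sumsq_pos n (v : 'cV[R]_n) : v != 0 -> 0 < (v^T *m v) 0 0.
Proof.
move=> vn0; rewrite mxE lt_def; apply/andP; split; last first.
  by apply: sumr_ge0 => i _; rewrite mxE -expr2 sqr_ge0.
apply: contra vn0 => /eqP /psumr_eq0P H.
apply/eqP/matrixP => i j; rewrite (ord1 j) mxE; apply/eqP.
have := H _ i isT; rewrite mxE -expr2 -sqrf_eq0 => ->//.
by move=> k _; rewrite mxE -expr2 sqr_ge0.
Qed.

Lemma pd_det_pos n (S : 'M[R]_n) :
  (forall v, v != 0 -> 0 < quadf v S) -> 0 < \det S.
Proof.
move=> HS.
pose M := fun s : R => 1%:M + s *: (S - 1%:M).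
pose g := fun s => \det (M s).
have Hg : forall s, is_derive s (1:R) g _ := fun s => MD_det (MD_lin 1%:M (S - 1%:M) s).
have Hpd : forall s, 0 <= s <= 1 -> \det (M s) != 0.
  move=> s /andP[s0 s1]; apply: pd_det_neq0 => v vn0.
  have -> : quadf v (M s) = (1 - s) * (v^T *m v) 0 0 + s * quadf v S.
    rewrite /quadf /M mulmxDr mulmxDl -!scalemxAr mulmxBr mulmx1.
    rewrite -scalemxAl mulmxBl !mxE.
    set p := (v^T *m v) 0 0; set q := (v^T *m S *m v) 0 0.
    by rewrite mulrBl mul1r mulrBr; ring.
  have hv := @sumsq_pos _ v vn0; have hq := HS v vn0.
  have [->|sp] := eqVneq s 0; first by rewrite subr0 mul1r mul0r addr0.
  have s0' : 0 < s by rewrite lt_def sp s0.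
  apply: ltr_pwDr; first exact: mulr_gt0.
  by apply: mulr_ge0; [rewrite subr_ge0|exact: ltW].
rewrite ltNge; apply/negP => Hle.
have g0 : g 0 = 1 by rewrite /g /M scale0r addr0 det1.
have g1 : g 1 = \det S by rewrite /g /M scale1r addrC subrK.
have [c cin gc] : exists2 c, c \in `[0, 1] & g c = 0.
  apply: IVT => //.
    apply: continuous_subspaceT => s; exact: d_cont (Hg s).
  rewrite g0 g1; apply/andP; split.
    by rewrite ge_min Hle orbT.
  by rewrite le_max ler01.
move: cin; rewrite in_itv /= => /Hpd.
by rewrite -/(g c) gc eqxx.
Qed.

End PD.
Arguments MD_lin {R m n}.
Arguments pd_det_pos {R n S}.
Arguments pd_det_neq0 {R n M}.
Arguments dD {R f g t df dg}.


Section Alg.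
Context {R : realType}.

Ltac rot := rewrite [LHS]mxtrace_mulC -!mulmxA.
Ltac tpose := rewrite -[LHS]mxtrace_tr !trmx_mul ?trmxK -!mulmxA.

Lemma final_alg n (Rm Xm Sp Sq Spq F A : 'M[R]_n) (cr cx : R) :
  Rm^T = Rm -> Xm^T = Xm -> Sp^T = Sp -> Sq^T = Sq -> F^T = F -> A^T = A ->
  let dR := (- cr) *: (Rm *m A *m Rm) in
  let dX := (- cx) *: (Xm *m A *m Xm) in
  \tr ((dR *m Sp *m Rm + Rm *m Sp *m dR + dX *m Sq *m Xm + Xm *m Sq *m dX
        + dR *m Spq *m Xm + Rm *m Spq *m dX + dX *m Spq^T *m Rm + Xm *m Spq^T *m dR) *m F)
  = - (cr + cr) * \tr (Rm *m Sp *m Rm *m F *m Rm *m A)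
    - (cx + cx) * \tr (Xm *m Sq *m Xm *m F *m Xm *m A)
    - (cr + cr) * \tr (Rm *m Spq *m Xm *m F *m Rm *m A)
    - (cx + cx) * \tr (Xm *m F *m Rm *m Spq *m Xm *m A).
Proof.
move=> sR sX sP sQ sF sA dR dX.
rewrite /dR /dX !mulmxDl !mxtraceD.
rewrite -!scalemxAl -!scalemxAr -!scalemxAl !mxtraceZ.
have t1 : \tr (Rm *m A *m Rm *m Sp *m Rm *m F) = \tr (Rm *m Sp *m Rm *m F *m Rm *m A).
  rewrite -!mulmxA; rot; rot; by rewrite !mulmxA.
have t2 : \tr (Rm *m Sp *m (Rm *m A *m Rm) *m F) = \tr (Rm *m Sp *m Rm *m F *m Rm *m A).
  rewrite -!mulmxA; tpose; rewrite ?sR ?sA ?sP ?sF; rot; rot; rot; by rewrite !mulmxA.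
have t3 : \tr (Xm *m A *m Xm *m Sq *m Xm *m F) = \tr (Xm *m Sq *m Xm *m F *m Xm *m A).
  rewrite -!mulmxA; rot; rot; by rewrite !mulmxA.
have t4 : \tr (Xm *m Sq *m (Xm *m A *m Xm) *m F) = \tr (Xm *m Sq *m Xm *m F *m Xm *m A).
  rewrite -!mulmxA; tpose; rewrite ?sX ?sA ?sQ ?sF; rot; rot; rot; by rewrite !mulmxA.
have t5 : \tr (Rm *m A *m Rm *m Spq *m Xm *m F) = \tr (Rm *m Spq *m Xm *m F *m Rm *m A).
  rewrite -!mulmxA; rot; rot; by rewrite !mulmxA.
have t6 : \tr (Xm *m Spq^T *m (Rm *m A *m Rm) *m F) = \tr (Rm *m Spq *m Xm *m F *m Rm *m A).
  rewrite -!mulmxA; tpose; rewrite ?sX ?sA ?sR ?sF; rot; rot; rot; by rewrite !mulmxA.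
have t7 : \tr (Rm *m Spq *m (Xm *m A *m Xm) *m F) = \tr (Xm *m F *m Rm *m Spq *m Xm *m A).
  rewrite -!mulmxA; rot; rot; rot; rot; by rewrite !mulmxA.
have t8 : \tr (Xm *m A *m Xm *m Spq^T *m Rm *m F) = \tr (Xm *m F *m Rm *m Spq *m Xm *m A).
  rewrite -!mulmxA; tpose; rewrite ?sX ?sA ?sR ?sF; rot; rot; rot; rot; rot; by rewrite !mulmxA.
rewrite t1 t2 t3 t4 t5 t6 t7 t8.
ring.
Qed.

End Alg.
Arguments final_alg {R n Rm Xm Sp Sq Spq F A cr cx}.


Section Aux.
Context {R : realType}.

Lemma MD_eq m n (f : R -> 'M[R]_(m,n)) t D D' : MD f t D -> D = D' -> MD f t D'.
Proof. by move=> H <-. Qed.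

Lemma MD_sand n (P Q : R -> 'M[R]_n) (C : 'M[R]_n) t dP dQ : MD P t dP -> MD Q t dQ ->
  MD (fun u => P u *m C *m Q u) t (dP *m C *m Q t + P t *m C *m dQ).
Proof.
move=> HP HQ; apply: MD_eq; first exact: MD_mul (MD_mul HP (MD_cst C t)) HQ.
by rewrite mulmx0 addr0.
Qed.

Lemma quadf_tr n (v : 'cV[R]_n) M : quadf v M = \tr (M *m (v *m v^T)).
Proof.
rewrite /quadf mulmxA -mxtrace_mulC.
by rewrite /mxtrace big_ord1 -mulmxA.
Qed.

Lemma scal_sand n (c : R) (P M Q : 'M[R]_n) : - (P *m (c *: M) *m Q) = (- c) *: (P *m M *m Q).
Proof. by rewrite -scalemxAr -scalemxAl scaleNr. Qed.

End Aux.
Arguments MD_eq {R m n f t D D'}.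
Arguments MD_sand {R n P Q} C {t dP dQ}.

Theorem lemma1 (R : realType) (N : nat) (Le : finType)
  (a : Le -> 'cV[R]_N) (r x : Le -> R)
  (Sp Sq Spq : 'M[R]_N) (sn2 : R) (Shat : 'M[R]_N) (b : Le -> R) :
  (0 < N)%N ->
  (forall l, 0 < r l) -> (forall l, 0 < x l) ->
  sym_mx Sp -> sym_mx Sq -> 0 <= sn2 -> psd_mx Shat ->
  inv_weighted a r b \in unitmx -> inv_weighted a x b \in unitmx ->
  pd_mx (Sigma_b a r x Sp Sq Spq sn2 b) ->
  forall l : Le,
  let Rm := invmx (inv_weighted a r b) in
  let Xm := invmx (inv_weighted a x b) in
  let F := F_mat a r x Sp Sq Spq sn2 Shat b in
  is_derive (0 : R) (1 : R)
    (fun t : R => f_obj a r x Sp Sq Spq sn2 Shat (shift_coord b l t))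
    (- (1 / r l) * quadf (a l) (Rm *m Sp *m Rm *m F *m Rm)
     - (1 / x l) * quadf (a l) (Xm *m Sq *m Xm *m F *m Xm)
     - (1 / r l) * quadf (a l) (Rm *m Spq *m Xm *m F *m Rm)
     - (1 / x l) * quadf (a l) (Xm *m F *m Rm *m Spq *m Xm)).
Proof.
move=> N0 rpos xpos sP sQ s0 [sH _] uR uX [sS pdS] l Rm Xm F.
set A := a l *m (a l)^T.
have Es : forall w u, inv_weighted a w (shift_coord b l u)
    = inv_weighted a w b + u *: ((1/2 * (w l)^-1) *: A).
  move=> w u; rewrite /inv_weighted /shift_coord.
  under eq_bigr do rewrite mulrDl scalerDl.
  rewrite big_split /= scalerDr; congr (_ + _).
  rewrite (bigD1 l) //= eqxx big1 ?addr0; last first.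
    by move=> k /negbTE ->; rewrite mul0r scale0r.
  by rewrite !scalerA; congr (_ *: _); ring.
have Eb : shift_coord b l 0 = b by apply: funext => k; rewrite /shift_coord if_same addr0.
have Hinv : forall w, inv_weighted a w b \in unitmx ->
    MD (fun u => invmx (inv_weighted a w (shift_coord b l u))) 0
       ((- (1/2 * (w l)^-1)) *: (invmx (inv_weighted a w b) *m A *m invmx (inv_weighted a w b))).
  move=> w uw.
  have H := MD_inv (MD_lin (inv_weighted a w b) ((1/2 * (w l)^-1) *: A) 0).
  rewrite scale0r addr0 in H; have {}H := H uw.
  have -> : (fun u => invmx (inv_weighted a w (shift_coord b l u)))
     = (fun u => invmx (inv_weighted a w b + u *: ((1/2 * (w l)^-1) *: A))).
    by apply: funext => u; rewrite Es.
  apply: MD_eq H _.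
  exact: scal_sand.
have HR := Hinv r uR; have HX := Hinv x uX.
rewrite -/Rm -/Xm in HR HX.
set cr := 1/2 * (r l)^-1 in HR; set cx := 1/2 * (x l)^-1 in HX.
pose dR := (- cr) *: (Rm *m A *m Rm); pose dX := (- cx) *: (Xm *m A *m Xm).
pose dS := dR *m Sp *m Rm + Rm *m Sp *m dR + dX *m Sq *m Xm + Xm *m Sq *m dX
        + dR *m Spq *m Xm + Rm *m Spq *m dX + dX *m Spq^T *m Rm + Xm *m Spq^T *m dR.
set S0 := Sigma_b a r x Sp Sq Spq sn2 b.
have HS : MD (fun u => Sigma_b a r x Sp Sq Spq sn2 (shift_coord b l u)) 0 dS.
  rewrite /Sigma_b /=.
  apply: MD_eq.
    apply: MD_add; last exact: MD_cst.
    apply: (MD_add _ (MD_sand Spq^T HX HR)).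
    apply: (MD_add _ (MD_sand Spq HR HX)).
    apply: (MD_add _ (MD_sand Sq HX HX)).
    apply: (MD_sand Sp HR HR).
  cbv beta; by rewrite Eb -/Rm -/Xm addr0 /dS !addrA.
have uS : S0 \in unitmx by rewrite unitmxE unitfE; exact: pd_det_neq0 pdS.
have dpos : 0 < \det S0 := pd_det_pos pdS.
have HS0 : Sigma_b a r x Sp Sq Spq sn2 (shift_coord b l 0) = S0 by rewrite Eb.
have Hd := MD_det HS.
have Hl : is_derive (\det (Sigma_b a r x Sp Sq Spq sn2 (shift_coord b l 0))) (1:R) (@ln R) (\det S0)^-1.
  rewrite HS0; exact: is_derive1_ln dpos.
have Hln := is_derive1_comp Hl Hd.
have uS' : (fun u => Sigma_b a r x Sp Sq Spq sn2 (shift_coord b l u)) 0 \in unitmx.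
  by cbv beta; rewrite HS0.
have Htr := MD_trace (MD_mul (MD_inv HS uS') (MD_cst Shat 0)).
eapply is_derive_eq; [exact (dD Hln Htr)|].
cbv beta; rewrite !HS0.
set Si := invmx S0.
have adjE : \adj S0 = \det S0 *: Si.
  by rewrite /Si /invmx uS scalerA mulfV ?scale1r // gt_eqF.
rewrite adjE -scalemxAr mxtraceZ mulrA mulVf ?mul1r ?gt_eqF //.
rewrite mulmx0 addr0 mulNmx linearN /=.
have rotE : \tr (Si *m dS *m Si *m Shat) = \tr (dS *m (Si *m Shat *m Si)).
  by rewrite -!mulmxA [LHS]mxtrace_mulC !mulmxA.
rewrite rotE.
have FE : F = Si - Si *m Shat *m Si by [].
have -> : \tr (dS *m Si) - \tr (dS *m (Si *m Shat *m Si)) = \tr (dS *m F).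
  by rewrite FE mulmxBr linearB.
have symW : forall w, (inv_weighted a w b)^T = inv_weighted a w b.
  move=> w; rewrite /inv_weighted linearZ /= linear_sum /=; congr (_ *: _).
  by apply: eq_bigr => k _; rewrite linearZ /= trmx_mul trmxK.
have sR : Rm^T = Rm by rewrite /Rm trmx_inv symW.
have sX : Xm^T = Xm by rewrite /Xm trmx_inv symW.
have sF : F^T = F.
  rewrite FE linearB /= !trmx_mul /Si trmx_inv.
  by rewrite -/S0 sS sH mulmxA.
have sA : A^T = A by rewrite /A trmx_mul trmxK.
have E := final_alg (cr:=cr) (cx:=cx) sR sX sP sQ sF sA.
cbv zeta in E.
rewrite /dS /dR /dX E !quadf_tr -/A.
have hr : cr + cr = 1 / r l by rewrite /cr -mulrDl -splitr.
have hx : cx + cx = 1 / x l by rewrite /cx -mulrDl -splitr.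
by rewrite hr hx !div1r.
Qed.
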